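(* Let $G$ be a connected graph with vertex set $\{v_1,\dots,v_n\}$, $n\geq 2$, and let $\widehat{G}$ be the graph constructed from $G$ as described in the context. Then the branch graph $B(\widehat{G}/C_q)$ is isomorphic to $G$, via the map $P_i\mapsto v_i$.
   Context: Construction of $\widehat{G}$: let $T$ be the star with center $q$ and leaves $y_1,\dots,y_n$. Let $\mathcal{P}$ be the family of paths of $T$ consisting of: for each $1\le i\le n$ a one-vertex path $P_i$ with $V(P_i)=\{y_i\}$; for each $1\le i<j\le n$ with $v_iv_j\in E(G)$ a path $P_{ij}$ with $V(P_{ij})=\{y_i,q,y_j\}$; for each $i$ with $d_G(v_i)=1$ a path $P_{iq}$ with $V(P_{iq})=\{q,y_i\}$. $\widehat{G}$ is the vertex-intersection graph of $\mathcal{P}$ (its vertices are the paths, two adjacent iff they share a vertex of $T$). $C_q$ is the set of paths of $\mathcal{P}$ containing $q$; it is a clique (maximal complete set) of $\widehat{G}$. For a clique $C$ of a graph $H$, the branch graph $B(H/C)$ has vertex set the vertices of $V(H)\setminus C$ adjacent to some vertex of $C$, and two such vertices $v,w$ are adjacent in $B(H/C)$ iff (1) $vw\notin E(H)$; (2) some vertex of $C$ is adjacent to both; and (3) there exist $v',w'\in C$ with $v'$ adjacent to $v$ but not to $w$, and $w'$ adjacent to $w$ but not to $v$. *)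

(* Defs.v *)
From mathcomp Require Import all_boot.
Set Implicit Arguments. Unset Strict Implicit. Unset Printing Implicit Defensive.

(* A finite simple graph on vertex type 'I_n is a symmetric irreflexive
   relation e; v_i is represented by i : 'I_n. *)

(* The star T: vertex set option 'I_n, centre q = None, leaves y_i = Some i.
   A path of T is represented by its vertex set. *)

Section Construction.
Variables (n : nat) (e : rel 'I_n).

Definition degree (i : 'I_n) : nat := #|[set j | e i j]|.

Definition pathsP : {set {set option 'I_n}} :=
  [set [set Some i] | i : 'I_n]
  :|: [set [set Some p.1; None; Some p.2] | p in [set p : 'I_n * 'I_n | (p.1 < p.2) && e p.1 p.2]]
  :|: [set [set None; Some i] | i in [set i | degree i == 1]].

Definition Ghat_adj (P Q : {set option 'I_n}) : bool :=
  [&& P \in pathsP, Q \in pathsP, P != Q & ~~ [disjoint P & Q]].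

Definition Cq : {set {set option 'I_n}} := [set P in pathsP | None \in P].
End Construction.

Section Branch.
Variables (T : finType) (V : {set T}) (adj : rel T) (C : {set T}).

Definition branch_vertices : {set T} :=
  [set v in V :\: C | [exists c in C, adj v c]].

Definition branch_adj (v w : T) : bool :=
  [&& v \in branch_vertices, w \in branch_vertices,
      ~~ adj v w,
      [exists c in C, adj c v && adj c w] &
      [exists v' in C, exists w' in C,
         [&& adj v' v, ~~ adj v' w, adj w' w & ~~ adj w' v]]].
End Branch.

(* Main.v *)
Require Import Defs.
From mathcomp Require Import all_boot.

Section H.
Local Set Implicit Arguments.
Variables (n : nat) (e : rel 'I_n).
Hypotheses (e_sym : symmetric e) (e_irr : irreflexive e).

Lemma paths_cases P : P \in pathsP e ->
  (exists i, P = [set Some i]) \/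
  (exists a b, e a b /\ P = [set Some a; None; Some b]) \/
  (exists a, P = [set None; Some a]).
Proof.
rewrite /pathsP !inE => /orP [/orP [/imsetP [i _ ->] | /imsetP [[a b]]] | /imsetP[a _ ->]].
- by left; exists i.
- rewrite inE /= => /andP[_ hab] ->; right; left; by exists a, b.
- by right; right; exists a.
Qed.

Lemma single_in i : [set Some i] \in pathsP e.
Proof. by rewrite /pathsP !inE; apply/orP; left; apply/orP; left; apply/imsetP; exists i. Qed.

Lemma SN (T : eqType) (x : T) : (Some x == None) = false. Proof. by []. Qed.

Definition tri (i k : 'I_n) : {set option 'I_n} :=
  if i < k then [set Some i; None; Some k] else [set Some k; None; Some i].

Lemma tri_mem i k x : (Some x \in tri i k) = (x == i) || (x == k).
Proof. rewrite /tri; case: ifP => _; rewrite !inE !(inj_eq (@Some_inj _)) SN orbF //. by rewrite orbC. Qed.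

Lemma tri_None i k : None \in tri i k.
Proof. by rewrite /tri; case: ifP; rewrite !inE. Qed.

Lemma tri_C i k : e i k -> tri i k \in Cq e.
Proof.
move=> hik; rewrite /Cq inE tri_None andbT /tri.
have nik : i != k by apply/eqP => E; move: hik; rewrite E e_irr.
case: ifP => lt.
  rewrite /pathsP !inE; apply/orP; left; apply/orP; right; apply/imsetP.
  by exists (i, k) => //; rewrite inE /= lt hik.
have lt' : k < i by rewrite ltn_neqAle leqNgt lt andbT eq_sym.
rewrite /pathsP !inE; apply/orP; left; apply/orP; right; apply/imsetP.
by exists (k, i) => //; rewrite inE /= lt' e_sym hik.
Qed.

Lemma pair_C a : degree e a == 1 -> [set None; Some a] \in Cq e.
Proof.
move=> ha; rewrite /Cq !inE eqxx /= andbT; apply/orP; right.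
by apply/imsetP; exists a; rewrite ?inE.
Qed.

Lemma adjC c i : c \in Cq e ->
  (Ghat_adj e c [set Some i] = (Some i \in c)) /\
  (Ghat_adj e [set Some i] c = (Some i \in c)).
Proof.
rewrite /Cq inE => /andP[cP cN].
have ne : c != [set Some i] by apply/eqP => E; move: cN; rewrite E inE.
rewrite /Ghat_adj cP single_in ne eq_sym ne /= disjoints1 disjoint_sym disjoints1.
by rewrite negbK.
Qed.


Lemma nbr (e_conn : forall i j : 'I_n, connect e i j) (n_ge2 : 2 <= n) i :
  exists k, e i k.
Proof.
have h0 : 0 < n by exact: leq_trans _ n_ge2.
have [j hj] : exists j : 'I_n, j != i.
  case: (eqVneq i (Ordinal h0)) => [->|ne].
    by exists (Ordinal n_ge2).
  by exists (Ordinal h0); rewrite eq_sym.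
case/connectP: (e_conn i j) => [[|k p]] /= pth lst.
  by move: hj; rewrite lst eqxx.
by case/andP: pth => hik _; exists k.
Qed.

Lemma other i j : e i j -> exists2 c, c \in Cq e & (Some i \in c) && (Some j \notin c).
Proof.
move=> hij.
have nij : i != j by apply/eqP => E; move: hij; rewrite E e_irr.
case: (boolP (degree e i == 1)) => hd.
  exists [set None; Some i]; first exact: pair_C.
  by rewrite !inE !(inj_eq (@Some_inj _)) SN eqxx /= eq_sym.
set A := [set x | e i x].
have jA : j \in A by rewrite inE.
have hA : 0 < #|A :\ j|.
  move: hd; rewrite /degree -/A (cardsD1 j A) jA add1n eqSS lt0n.
  by [].
case/card_gt0P: hA => k; rewrite !inE => /andP[nkj hik].
exists (tri i k); first exact: tri_C.
by rewrite !tri_mem eqxx /= negb_or ![j == _]eq_sym nij nkj.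
Qed.

End H.


Theorem claim1 (n : nat) (e : rel 'I_n)
  (e_sym : symmetric e) (e_irr : irreflexive e)
  (e_conn : forall i j : 'I_n, connect e i j)
  (n_ge2 : 2 <= n) :
  let V := pathsP e in
  let adj := Ghat_adj e in
  let C := Cq e in
  let f := fun i : 'I_n => [set Some i] : {set option 'I_n} in
  injective f /\
  (forall P, P \in branch_vertices V adj C <-> exists i, P = f i) /\
  (forall i j : 'I_n, branch_adj V adj C (f i) (f j) = e i j).
Proof.
move=> V adj C f.
have finj : injective f.
  move=> i j /setP /(_ (Some i)); rewrite !inE eqxx => /esym /eqP [] //.
have fnC : forall i, f i \notin C.
  by move=> i; rewrite /C /Cq !inE eq_sym SN andbF.
have fB : forall i, f i \in branch_vertices V adj C.
  move=> i; rewrite /branch_vertices inE in_setD fnC single_in /=.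
  case: (nbr e e_conn n_ge2 i) => k hik.
  apply/existsP; exists (tri i k); rewrite (tri_C e_sym e_irr _ _ hik) /=.
  by rewrite /adj /f (adjC _ (tri_C e_sym e_irr _ _ hik)).2 tri_mem eqxx.
split; first exact: finj.
split.
  move=> P; split; last by case=> i ->.
  rewrite /branch_vertices inE in_setD => /andP[/andP[PnC PV] _].
  case: (paths_cases PV) => [//|[[a [b [_ E]]]|[a E]]];
    by move: PnC; rewrite /C /Cq inE PV E !inE.
move=> i j.
rewrite /branch_adj !fB /=.
case: (eqVneq i j) => [<-|nij].
  rewrite e_irr; apply/negbTE; apply/negP => /and3P[_ _ H].
  case/existsP: H => v' /andP[_ /existsP[w' /andP[_ /and4P[h1 h2 _ _]]]].
  by rewrite h1 in h2.
have nadj : ~~ adj (f i) (f j).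
  by rewrite /adj /Ghat_adj /f disjoints1 !inE (inj_eq (@Some_inj _)) eq_sym nij !andbF.
rewrite nadj /=.
apply/idP/idP.
  case/andP => /existsP [c /andP[cC /andP[]]].
  rewrite /adj /f (adjC _ cC).1 (adjC _ cC).1 => hi hj _.
  move: cC; rewrite /C /Cq inE => /andP[cP _].
  case: (paths_cases cP) => [[a E]|[[a [b [hab E]]]|[a E]]]; move: hi hj; rewrite E !inE.
  - rewrite !(inj_eq (@Some_inj _)) => /eqP Ei /eqP Ej; by move: nij; rewrite Ei Ej eqxx.
  - rewrite !(inj_eq (@Some_inj _)) !SN !orbF.
    case/orP => /eqP Ei /orP [] /eqP Ej; move: nij; rewrite Ei Ej ?eqxx // => _.
      by rewrite e_sym.
  - rewrite !(inj_eq (@Some_inj _)) !SN /= => /eqP Ei /eqP Ej; by move: nij; rewrite Ei Ej eqxx.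
move=> hij; apply/andP; split.
  apply/existsP; exists (tri i j); rewrite (tri_C e_sym e_irr _ _ hij) /=.
  by rewrite /adj /f (adjC _ (tri_C e_sym e_irr _ _ hij)).1 (adjC _ (tri_C e_sym e_irr _ _ hij)).1 !tri_mem !eqxx orbT.
case: (other e_sym e_irr _ _ hij) => v' v'C /andP[h1 h2].
have hji : e j i by rewrite e_sym.
case: (other e_sym e_irr _ _ hji) => w' w'C /andP[h3 h4].
apply/existsP; exists v'; rewrite v'C /=; apply/existsP; exists w'; rewrite w'C /=.
by rewrite /adj /f (adjC _ v'C).1 (adjC _ v'C).1 (adjC _ w'C).1 (adjC _ w'C).1 h1 h2 h3 h4.
Qed.
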